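(* (i) For every normalized one-parameter subgroup $\lambda$ of $\mathrm{SL}_2\times\mathrm{SL}_3$, the set $M^{\ominus}(\lambda)$ is contained in $M^{\ominus}(\lambda'_i)$ for some $i\in\{1,\dots,7\}$, where $\lambda'_1=(3,-3,2,2,-4)$, $\lambda'_2=(3,-3,2,0,-2)$, $\lambda'_3=(3,-3,4,-2,-2)$, $\lambda'_4=(0,0,2,-1,-1)$, $\lambda'_5=(1,-1,2,0,-2)$, $\lambda'_6=(0,0,1,1,-2)$, $\lambda'_7=(1,-1,0,0,0)$. (ii) A $(2,3)$-hypersurface $S=\{f=0\}\subset\mathbb{P}^1\times\mathbb{P}^2$ is not properly stable if $f$ is of one of the following forms, where $c,c_i$ denote cubic forms, $q,q_i$ quadratic forms, $l$ linear forms in the indicated variables and $\mu,\nu$ constants: (N1) $f=x_1^2c(y_0,y_1,y_2)+x_0x_1y_2q(y_0,y_1)+x_0^2y_2^2l(y_0,y_1,y_2)$; (N2) $f=x_1^2c_0(y_0,y_1,y_2)+x_0x_1[c_1(y_1,y_2)+y_0y_2l(y_1,y_2)]+\mu x_0^2y_2^3$; (N3) $f=x_1^2[c_1(y_1,y_2)+y_0q_1(y_1,y_2)+y_0^2l(y_1,y_2)]+x_0x_1[c_2(y_1,y_2)+y_0q_2(y_1,y_2)]+x_0^2c_0(y_1,y_2)$; (N4) $f=x_1^2[c_0(y_1,y_2)+y_0q_0(y_1,y_2)]+x_0x_1[c_1(y_1,y_2)+y_0q_1(y_1,y_2)]+x_0^2[c_2(y_1,y_2)+y_0q_2(y_1,y_2)]$;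 (N5) $f=x_1^2[c_0(y_1,y_2)+y_0q_0(y_1,y_2)+\mu y_0^2y_2]+x_0x_1[c_1(y_1,y_2)+y_0y_2l(y_1,y_2)]+x_0^2y_2(q_2(y_1,y_2)+\nu y_0y_2)$; (N6) $f=y_2\cdot q(x_0,x_1,y_0,y_1,y_2)$ with $q$ bihomogeneous of bidegree $(2,2)$; (N7) $f=x_1[x_0c_0(y_0,y_1,y_2)+x_1c_1(y_0,y_1,y_2)]$.
   Context: Bihomogeneous coordinates $(x_0,x_1;y_0,y_1,y_2)$ on $\mathbb{P}^1\times\mathbb{P}^2$; stability refers to GIT for the natural action of $\mathrm{SL}_2\times\mathrm{SL}_3$ on $\mathbb{P}(H^0(\mathcal{O}(2,3)))$. A tuple $(a,-a,b,c,-b-c)$ denotes the one-parameter subgroup $t\mapsto\mathrm{diag}(t^a,t^{-a},t^b,t^c,t^{-b-c})$ acting on $(x_0,x_1,y_0,y_1,y_2)$; it is normalized if $a\geq0$ and $b\geq c\geq-b-c$. The weight of the monomial $x_0^ux_1^{2-u}y_0^vy_1^wy_2^{3-v-w}$ with respect to it is $au-a(2-u)+bv+cw+(-b-c)(3-v-w)$. $M^{\ominus}(\lambda)$ is the set of bidegree $(2,3)$ monomials of non-positive weight with respect to $\lambda$. *)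

(* Defs.v *)
(* Ground field: algC (an algebraically closed field of
   characteristic 0, standing in for the complex numbers). *)
From HB Require Import structures.
From mathcomp Require Import all_boot all_order all_algebra all_field.
From mathcomp Require Import mpoly.
Set Implicit Arguments. Unset Strict Implicit. Unset Printing Implicit Defensive.
Import Order.TTheory GRing.Theory Num.Theory.
Local Open Scope ring_scope.

(* Monomials of bidegree (2,3):  x0^u x1^(2-u) y0^v y1^w y2^(3-v-w).       *)
Definition mon := {m : 'I_3 * 'I_4 * 'I_4 | (nat_of_ord m.1.2 + nat_of_ord m.2 <= 3)%N}.

Definition mu (m : mon) : nat := (val m).1.1.
Definition mx1 (m : mon) : nat := (2 - mu m)%N.
Definition mv (m : mon) : nat := (val m).1.2.
Definition mw (m : mon) : nat := (val m).2.
Definition mz (m : mon) : nat := (3 - mv m - mw m)%N.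

(* A one-parameter subgroup (a,-a,b,c,-b-c) is encoded by the triple (a,b,c). *)
Definition ops := (int * int * int)%type.

Definition normalized (l : ops) : Prop :=
  let '(a, b, c) := l in 0 <= a /\ c <= b /\ - b - c <= c.

Definition nontrivial (l : ops) : Prop := l <> (0, 0, 0).

Definition weight (l : ops) (m : mon) : int :=
  let '(a, b, c) := l in
  a * (mu m)%:Z - a * (mx1 m)%:Z + b * (mv m)%:Z + c * (mw m)%:Z
  + (- b - c) * (mz m)%:Z.

Definition Mneg (l : ops) : pred mon := fun m => weight l m <= 0.

Definition lam'1 : ops := (3, 2, 2).
Definition lam'2 : ops := (3, 2, 0).
Definition lam'3 : ops := (3, 4, -2).
Definition lam'4 : ops := (0, 2, -1).
Definition lam'5 : ops := (1, 2, 0).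
Definition lam'6 : ops := (0, 1, 1).
Definition lam'7 : ops := (1, 0, 0).
Definition lams' : seq ops := [:: lam'1; lam'2; lam'3; lam'4; lam'5; lam'6; lam'7].

Definition form23 := {ffun mon -> algC}.

Definition monv (m : mon) (x : 'cV[algC]_2) (y : 'cV[algC]_3) : algC :=
  x (inord 0) ord0 ^+ mu m * x (inord 1) ord0 ^+ mx1 m *
  y (inord 0) ord0 ^+ mv m * y (inord 1) ord0 ^+ mw m * y (inord 2) ord0 ^+ mz m.

Definition evalf (f : form23) (x : 'cV[algC]_2) (y : 'cV[algC]_3) : algC :=
  \sum_(m : mon) f m * monv m x y.

Definition acts (g1 : 'M[algC]_2) (g2 : 'M[algC]_3) (f h : form23) : Prop :=
  forall x y, evalf h x y = evalf f (g1 *m x) (g2 *m y).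

Definition inSL (g1 : 'M[algC]_2) (g2 : 'M[algC]_3) : Prop :=
  \det g1 = 1 /\ \det g2 = 1.

Definition orbit (f : form23) (h : form23) : Prop :=
  exists g1 g2, inSL g1 g2 /\ acts g1 g2 f h.

Definition coords (f : form23) : 'I_#|{: mon}| -> algC := fun i => f (enum_val i).

Definition zariski_closed (A : form23 -> Prop) : Prop :=
  forall p, ~ A p ->
    exists P : {mpoly algC[#|{: mon}|]},
      (forall q, A q -> P.@[coords q] = 0) /\ P.@[coords p] != 0.

Definition finite_stabilizer (f : form23) : Prop :=
  exists s : seq ('M[algC]_2 * 'M[algC]_3),
    forall g1 g2, inSL g1 g2 -> acts g1 g2 f f -> (g1, g2) \in s.

(* Mumford: [f] is properly stable iff f <> 0, the orbit of f in the affine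
   cone is closed and the stabilizer of f is finite. *)
Definition properly_stable (f : form23) : Prop :=
  f <> 0 /\ zariski_closed (orbit f) /\ finite_stabilizer f.

Definition supported_in (P : pred mon) (f : form23) : Prop :=
  forall m, f m != 0 -> P m.

Definition N1 : pred mon := fun m =>
  [|| mu m == 0%N,                        (* x1^2 c(y0,y1,y2) *)
      (mu m == 1%N) && (mz m == 1%N)      (* x0x1 y2 q(y0,y1) *)
    | (mu m == 2%N) && (2 <= mz m)%N ].   (* x0^2 y2^2 l(y0,y1,y2) *)

Definition N2 : pred mon := fun m =>
  [|| mu m == 0%N,                                          (* x1^2 c0 *)
      (mu m == 1%N) && ((mv m == 0%N) || ((mv m == 1%N) && (1 <= mz m)%N))
                     (* x0x1 [c1(y1,y2) + y0 y2 l(y1,y2)] *)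
    | (mu m == 2%N) && (mz m == 3%N) ].                     (* mu x0^2 y2^3 *)

Definition N3 : pred mon := fun m =>
  [|| (mu m == 0%N) && (mv m <= 2)%N,   (* x1^2 [c1 + y0 q1 + y0^2 l] (y1,y2) *)
      (mu m == 1%N) && (mv m <= 1)%N    (* x0x1 [c2 + y0 q2] *)
    | (mu m == 2%N) && (mv m == 0%N) ]. (* x0^2 c0(y1,y2) *)

Definition N4 : pred mon := fun m =>
  (mv m <= 1)%N.  (* each x-coefficient is c_i(y1,y2) + y0 q_i(y1,y2) *)

Definition N5 : pred mon := fun m =>
  [|| (mu m == 0%N) && ((mv m <= 1)%N || ((mv m == 2%N) && (mz m == 1%N))),
         (* x1^2 [c0(y1,y2) + y0 q0(y1,y2) + mu y0^2 y2] *)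
      (mu m == 1%N) && ((mv m == 0%N) || ((mv m == 1%N) && (1 <= mz m)%N))
         (* x0x1 [c1(y1,y2) + y0 y2 l(y1,y2)] *)
    | (mu m == 2%N) && (((mv m == 0%N) && (1 <= mz m)%N)
                        || ((mv m == 1%N) && (mz m == 2%N))) ].
         (* x0^2 y2 (q2(y1,y2) + nu y0 y2) *)

Definition N6 : pred mon := fun m => (1 <= mz m)%N.   (* y2 * q, q of bidegree (2,2) *)

Definition N7 : pred mon := fun m => (1 <= mx1 m)%N.  (* x1 [x0 c0 + x1 c1] *)

Definition is_Nform (f : form23) : Prop :=
  supported_in N1 f \/ supported_in N2 f \/ supported_in N3 f \/
  supported_in N4 f \/ supported_in N5 f \/ supported_in N6 f \/
  supported_in N7 f.

(* Main.v *)
Require Import Defs.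
From HB Require Import structures.
From mathcomp Require Import all_boot all_order all_algebra all_field.
From mathcomp Require Import mpoly zify ring.
From Stdlib Require Import Classical_Prop.
Set Implicit Arguments. Unset Strict Implicit.
Import Order.TTheory GRing.Theory Num.Theory.
Local Open Scope ring_scope.

Definition Kcond (a b c : int) : bool :=
  [|| (0 < c) && (0 < 2*a - b + c),
      [&& 0 < b - c, 0 < b + 2*c & 0 < 2*a - 2*b - c],
      (0 < -2*a + 3*b) && (0 < 2*a - b - 2*c),
      0 < -2*a + b - c,
      [&& 0 < -2*a + 2*b + c, 0 < b - c, 0 < a & 0 < 2*a + 3*c],
      0 < -2*a + 3*c
    | 0 < 2*a - 3*b - 3*c].

Lemma cover (a b c : int) : 0 <= a -> c <= b -> -b - c <= c -> (a,b,c) <> (0,0,0) ->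
  Kcond a b c.
Proof.
move=> ha hbc hc hn.
have H : ~ (a = 0 /\ b = 0 /\ c = 0) by move=> [Ha [Hb Hc]]; apply: hn; rewrite Ha Hb Hc.
rewrite /Kcond. lia.
Qed.

Ltac monos := let u := fresh in let v := fresh in let w := fresh in
  let Hu := fresh in let Hv := fresh in let Hw := fresh in let H := fresh in
  let m := fresh in move=> m; rewrite !unfold_in /Mneg; move: m;
  case=> [[[[u Hu] [v Hv]] [w Hw]] H];
  rewrite /weight /mx1 /mz /mu /mv /mw /=;
  move: Hu Hv Hw H;
  case: u => [|[|[|u]]] Hu //; case: v => [|[|[|[|v]]]] Hv //;
  case: w => [|[|[|[|w]]]] Hw // H; lia.

Lemma sub1 (a b c : int) : 0 <= a -> c <= b -> -b - c <= c ->
  (0 < c) && (0 < 2*a - b + c) -> {subset Mneg (a,b,c) <= Mneg lam'1}.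
Proof. move=> ha hb hc /andP[h1 h2]; monos. Qed.
Lemma sub2 (a b c : int) : 0 <= a -> c <= b -> -b - c <= c ->
  [&& 0 < b - c, 0 < b + 2*c & 0 < 2*a - 2*b - c] -> {subset Mneg (a,b,c) <= Mneg lam'2}.
Proof. move=> ha hb hc /and3P[h1 h2 h3]; monos. Qed.
Lemma sub3 (a b c : int) : 0 <= a -> c <= b -> -b - c <= c ->
  (0 < -2*a + 3*b) && (0 < 2*a - b - 2*c) -> {subset Mneg (a,b,c) <= Mneg lam'3}.
Proof. move=> ha hb hc /andP[h1 h2]; monos. Qed.
Lemma sub4 (a b c : int) : 0 <= a -> c <= b -> -b - c <= c ->
  0 < -2*a + b - c -> {subset Mneg (a,b,c) <= Mneg lam'4}.
Proof. move=> ha hb hc h1; monos. Qed.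
Lemma sub5 (a b c : int) : 0 <= a -> c <= b -> -b - c <= c ->
  [&& 0 < -2*a + 2*b + c, 0 < b - c, 0 < a & 0 < 2*a + 3*c] -> {subset Mneg (a,b,c) <= Mneg lam'5}.
Proof. move=> ha hb hc /and4P[h1 h2 h3 h4]; monos. Qed.
Lemma sub6 (a b c : int) : 0 <= a -> c <= b -> -b - c <= c ->
  0 < -2*a + 3*c -> {subset Mneg (a,b,c) <= Mneg lam'6}.
Proof. move=> ha hb hc h1; monos. Qed.
Lemma sub7 (a b c : int) : 0 <= a -> c <= b -> -b - c <= c ->
  0 < 2*a - 3*b - 3*c -> {subset Mneg (a,b,c) <= Mneg lam'7}.
Proof. move=> ha hb hc h1; monos. Qed.

Lemma part1 : forall l : ops, normalized l -> nontrivial l ->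
     exists2 l', l' \in lams' & {subset Mneg l <= Mneg l'}.
Proof.
case=> [[a b] c] [ha [hb hc]] hn.
have := @cover a b c ha hb hc hn; rewrite /Kcond.
case/or4P=> [h|h|h|/or4P[h|h|h|h]].
- by exists lam'1; [rewrite inE eqxx | exact: sub1].
- by exists lam'2; [rewrite !inE eqxx !orbT | exact: sub2].
- by exists lam'3; [rewrite !inE eqxx !orbT | exact: sub3].
- by exists lam'4; [rewrite !inE eqxx !orbT | exact: sub4].
- by exists lam'5; [rewrite !inE eqxx !orbT | exact: sub5].
- by exists lam'6; [rewrite !inE eqxx !orbT | exact: sub6].
- by exists lam'7; [rewrite !inE eqxx !orbT | exact: sub7].
Qed.
Definition d1 (a : int) (s : algC) : 'M[algC]_2 :=
  diag_mx (\row_(i < 2) if (i : nat) == 0%N then s ^ (- a) else s ^ a).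
Definition d2 (b c : int) (s : algC) : 'M[algC]_3 :=
  diag_mx (\row_(i < 3) if (i : nat) == 0%N then s ^ (- b)
                        else if (i : nat) == 1%N then s ^ (- c) else s ^ (b + c)).

Lemma powzn (x : algC) (z : int) (n : nat) : (x ^ z) ^+ n = x ^ (z * n%:Z).
Proof. by rewrite -exprz_exp. Qed.

Lemma monv_d a b c (s : algC) m x y : s != 0 ->
  monv m (d1 a s *m x) (d2 b c s *m y) = s ^ (- weight (a,b,c) m) * monv m x y.
Proof.
move=> s0; rewrite /monv !mul_diag_mx !mxE !inordK //=.
rewrite !exprMn !powzn.
have -> : s ^ (- weight (a, b, c) m) =
  s ^ (- a * (mu m)%:Z) * s ^ (a * (mx1 m)%:Z) * s ^ (- b * (mv m)%:Z)
  * s ^ (- c * (mw m)%:Z) * s ^ ((b + c) * (mz m)%:Z).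
  rewrite -!expfzDr //; congr (s ^ _); rewrite /weight; ring.
ring.
Qed.

Definition scale (l : ops) (s : algC) (f : form23) : form23 :=
  [ffun m => s ^ (- weight l m) * f m].

Lemma acts_d a b c s f : s != 0 -> acts (d1 a s) (d2 b c s) f (scale (a,b,c) s f).
Proof.
move=> s0; rewrite /acts => x y; rewrite /evalf; apply: eq_bigr => m _.
rewrite ffunE monv_d //; ring.
Qed.

Lemma powz0 (s : algC) (z : int) : z = 0 -> s ^ z = 1.
Proof. by move->. Qed.

Lemma inSL_d a b c s : s != 0 -> inSL (d1 a s) (d2 b c s).
Proof.
move=> s0; split; rewrite det_diag !big_ord_recr big_ord0 /= !mxE /= mul1r -!expfzDr //;
  apply: powz0; lia.
Qed.

Lemma acts_conj g1 g2 h1 h2 f f0 : g1 \in unitmx -> g2 \in unitmx ->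
  acts g1 g2 f f0 -> acts h1 h2 f0 f0 ->
  acts (g1 *m h1 *m invmx g1) (g2 *m h2 *m invmx g2) f f.
Proof.
move=> u1 u2 A H; rewrite /acts => x y.
have := A (invmx g1 *m x) (invmx g2 *m y).
rewrite !mulmxA !mulmxV // !mul1mx => <-.
by rewrite H A !mulmxA.
Qed.

Lemma inSL_conj g1 g2 h1 h2 : inSL g1 g2 -> inSL h1 h2 ->
  inSL (g1 *m h1 *m invmx g1) (g2 *m h2 *m invmx g2).
Proof.
move=> [e1 e2] [e3 e4]; split;
by rewrite !det_mulmx det_inv ?e1 ?e2 ?e3 ?e4 invr1 !mulr1.
Qed.

Lemma unit_SL g1 g2 : inSL g1 g2 -> (g1 \in unitmx) /\ (g2 \in unitmx).
Proof. by move=> [e1 e2]; rewrite !unitmxE e1 e2 unitr1. Qed.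

Lemma poly_limit N (P : {mpoly algC[N]}) (v : 'I_N -> algC) (k : 'I_N -> nat) :
  (forall n : nat, P.@[fun i => v i * (n.+1%:R) ^+ k i] = 0) ->
  P.@[fun i => v i * 0 ^+ k i] = 0.
Proof.
move=> H.
pose Q : {poly algC} := mmap (@polyC algC) (fun i => v i *: 'X^(k i)) P.
have hQ : forall t, Q.[t] = P.@[fun i => v i * t ^+ k i].
  move=> t; rewrite /Q /mmap horner_sum mevalE; apply: eq_bigr => m _.
  rewrite hornerM hornerC /mmap1 horner_prod; congr (_ * _); apply: eq_bigr => i _.
  by rewrite horner_exp hornerZ hornerXn.
have Q0 : Q = 0.
  apply/eqP; apply: contraT => nz.
  have := @max_poly_roots _ Q [seq n.+1%:R | n <- iota 0 (size Q)] nz.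
  rewrite size_map size_iota ltnn; apply.
    by apply/allP => t /mapP [n _ ->]; rewrite /root hQ H.
  rewrite map_inj_uniq ?iota_uniq // => n1 n2 /eqP; rewrite eqr_nat => /eqP [].
  done.
by rewrite -hQ Q0 horner0.
Qed.

Lemma powz_inj (z : int) (x y : algC) : z != 0 -> 0 < x -> 0 < y -> x ^ z = y ^ z -> x = y.
Proof.
case: z => [n|n] nz hx hy E.
- apply/eqP; rewrite -(@eqrXn2 _ n) ?ltW //; last by case: n nz {E}.
  by apply/eqP; exact: E.
- apply/eqP; rewrite -(@eqrXn2 _ n.+1) ?ltW //.
  by apply/eqP; apply: invr_inj; exact: E.
Qed.

Lemma conj_cancel n (g d d' : 'M[algC]_n) : g \in unitmx ->
  g *m d *m invmx g = g *m d' *m invmx g -> d = d'.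
Proof.
move=> u /(congr1 (mulmx (invmx g))); rewrite !mulmxA !mulVmx // !mul1mx.
by move/(congr1 (mulmx^~ g)); rewrite !mulmxKV.
Qed.

Lemma notps (a b c : int) (f : form23) : (a != 0) || (b != 0) ->
  supported_in (Mneg (a,b,c)) f -> ~ properly_stable f.
Proof.
move=> hab hsup [_ [hcl [s hs]]].
pose w := weight (a,b,c).
pose f0 : form23 := [ffun m => if w m == 0 then f m else 0].
have orb : Defs.orbit f f0.
  apply: NNPP => nor.
  have [P [Pv Pn]] := hcl f0 nor.
  have Hn : forall n : nat,
      P.@[fun i => f (enum_val i) * (n.+1%:R) ^+ `|w (enum_val i)|%N] = 0.
    move=> n; have t0 : (n.+1%:R : algC) != 0 by rewrite pnatr_eq0.
    rewrite -(Pv (scale (a,b,c) n.+1%:R f)).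
      apply: meval_eq => i; rewrite /coords ffunE.
      case: (eqVneq (f (enum_val i)) 0) => [->|fe]; first by rewrite mulr0 mul0r.
      have := hsup _ fe; rewrite /Mneg -/w => wle.
      have -> : - w (enum_val i) = (`|w (enum_val i)|%N)%:Z by lia.
      by rewrite mulrC.
    exists (d1 a n.+1%:R), (d2 b c n.+1%:R); split; [exact: inSL_d | exact: acts_d].
  move/eqP: Pn; apply; rewrite -(@poly_limit _ _ _ _ Hn); apply: meval_eq => i.
  rewrite /coords ffunE expr0n absz_eq0; case: ifP => _; by rewrite ?mulr1 ?mulr0.
have [g1 [g2 [gSL gact]]] := orb.
have [u1 u2] := unit_SL gSL.
have fix0 : forall t : algC, t != 0 -> acts (d1 a t) (d2 b c t) f0 f0.
  move=> t t0.
  have E : scale (a,b,c) t f0 = f0.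
    apply/ffunP => m; rewrite !ffunE; case: ifP => [/eqP E0|_].
      by rewrite /w in E0; rewrite E0 oppr0 expr0z mul1r.
    by rewrite mulr0.
  by rewrite -{2}E; apply: acts_d.
pose F (n : nat) := (g1 *m d1 a n.+1%:R *m invmx g1, g2 *m d2 b c n.+1%:R *m invmx g2).
have inS : forall n, F n \in s.
  move=> n; have t0 : (n.+1%:R : algC) != 0 by rewrite pnatr_eq0.
  apply: hs; [apply: inSL_conj => //; exact: inSL_d | apply: acts_conj => //; exact: fix0].
have Finj : injective F.
  move=> n1 n2 [/conj_cancel E1 /conj_cancel E2].
  have pos : forall n : nat, 0 < (n.+1%:R : algC) by move=> n; rewrite ltr0Sn.
  suff : (n1.+1%:R : algC) = n2.+1%:R by move/eqP; rewrite eqr_nat => /eqP [].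
  case/orP: hab => [a0|b0].
  - have := congr1 (fun M : 'M[algC]_2 => M ord0 ord0) (E1 u1); rewrite !mxE /=.
    by apply: powz_inj; rewrite ?oppr_eq0.
  - have := congr1 (fun M : 'M[algC]_3 => M ord0 ord0) (E2 u2); rewrite !mxE /=.
    by apply: powz_inj; rewrite ?oppr_eq0.
have : ((size s).+1 <= size s)%N.
  rewrite -{1}(size_iota 0 (size s).+1) -(size_map F).
  apply: uniq_leq_size; first by rewrite map_inj_uniq // iota_uniq.
  by move=> x /mapP [n _ ->]; exact: inS.
by rewrite ltnn.
Qed.

Ltac monos2 := let u := fresh in let v := fresh in let w := fresh in
  let Hu := fresh in let Hv := fresh in let Hw := fresh in let H := fresh in
  case=> [[[[u Hu] [v Hv]] [w Hw]] H];
  rewrite /N1 /N2 /N3 /N4 /N5 /N6 /N7 /Mneg /weight /mx1 /mz /mu /mv /mw /=;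
  move: Hu Hv Hw H;
  case: u => [|[|[|u]]] Hu //; case: v => [|[|[|[|v]]]] Hv //;
  case: w => [|[|[|[|w]]]] Hw // H.

Lemma supp_mono (P Q : pred mon) f : (forall m, P m -> Q m) ->
  supported_in P f -> supported_in Q f.
Proof. by move=> PQ H m /H /PQ. Qed.

Lemma nf (f : form23) : is_Nform f ->
  exists l : ops, [/\ (l.1.1 != 0) || (l.1.2 != 0) & supported_in (Mneg l) f].
Proof.
case=> [H|[H|[H|[H|[H|[H|H]]]]]].
- exists lam'1; split => //; apply: supp_mono H; monos2.
- exists lam'2; split => //; apply: supp_mono H; monos2.
- exists lam'3; split => //; apply: supp_mono H; monos2.
- exists lam'4; split => //; apply: supp_mono H; monos2.
- exists lam'5; split => //; apply: supp_mono H; monos2.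
- exists lam'6; split => //; apply: supp_mono H; monos2.
- exists lam'7; split => //; apply: supp_mono H; monos2.
Qed.

Theorem lemma3p1 :
  (forall l : ops, normalized l -> nontrivial l ->
     exists2 l', l' \in lams' & {subset Mneg l <= Mneg l'})
  /\
  (forall f : form23, is_Nform f ->
     ~ properly_stable f).
Proof.
split; first exact: part1.
move=> f /nf [[[a b] c] [hab hs]]; exact: (@notps a b c f hab hs).
Qed.
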